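(* Let $s,n,k$ be positive integers, $\Gamma=\mathbb{Z}_{sn}\mathbin{\mathrm{wr}}\mathbb{Z}^k$ and $G=\mathbb{Z}_n\mathbin{\mathrm{wr}}\mathbb{Z}^k$, and let $\Pi\colon\Gamma\to G$ be the homomorphism reducing coefficients mod $n$ (defined in the context). Then $\ker\Pi$ is a completely invariant subgroup of $\Gamma$, i.e. it is mapped into itself by every endomorphism of $\Gamma$.
   Context: For a positive integer $m$, $\mathbb{Z}_m\mathbin{\mathrm{wr}}\mathbb{Z}^k=\bigoplus_{x\in\mathbb{Z}^k}(\mathbb{Z}_m)_x\rtimes_\alpha\mathbb{Z}^k$ is the restricted wreath product, where $\alpha(z)$ maps $(\mathbb{Z}_m)_x$ onto $(\mathbb{Z}_m)_{z+x}$. Let $\Sigma$, $\Omega$ denote the torsion subgroups $\bigoplus_x(\mathbb{Z}_{sn})_x$ of $\Gamma$ and $\bigoplus_x(\mathbb{Z}_n)_x$ of $G$, with generators $\Delta_x$ of $(\mathbb{Z}_{sn})_x$ and $\delta_x$ of $(\mathbb{Z}_n)_x$. Define $\pi\colon\Sigma\to\Omega$ by $\pi(k_1\Delta_{x_1}+\dots+k_l\Delta_{x_l})=(k_1\bmod n)\delta_{x_1}+\dots+(k_l\bmod n)\delta_{x_l}$, and $\Pi(\sigma,z)=(\pi(\sigma),z)$ for $\sigma\in\Sigma$, $z\in\mathbb{Z}^k$. *)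

(* Defs.v *)
From mathcomp Require Import all_boot all_order all_algebra.
Unset Printing Implicit Defensive.
Import Order.TTheory GRing.Theory Num.Theory.
Local Open Scope ring_scope.

Definition Zk (k : nat) := 'rV[int]_k.

Definition fin_supp (k : nat) (f : Zk k -> int) : Prop :=
  exists S : seq (Zk k), forall x, x \notin S -> f x = 0.

(* Values are canonical representatives of Z_m, i.e. in [0, m)
   (for m > 0); an element of (+)_x (Z_m)_x is thus a finitely supported
   function with reduced values. *)
Definition reduced (m : nat) (k : nat) (f : Zk k -> int) : Prop :=
  forall x, (f x %% m%:Z)%Z = f x.

Definition is_wr_elt (m k : nat) (p : (Zk k -> int) * Zk k) : Prop :=
  fin_supp k p.1 /\ reduced m k p.1.

(* Z_m wr Z^k = (+)_{x in Z^k} (Z_m)_x  ><|_alpha  Z^k ; an element is a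
   pair (sigma, z). *)
Definition wr (m k : nat) := { p : (Zk k -> int) * Zk k | is_wr_elt m k p }.

Definition wr_sigma (m k : nat) (g : wr m k) : Zk k -> int := (sval g).1.
Definition wr_z (m k : nat) (g : wr m k) : Zk k := (sval g).2.

Lemma wr_norm_proof (m k : nat) (f : Zk k -> int) (z : Zk k) :
  fin_supp k f -> is_wr_elt m k ((fun x => (f x %% m%:Z)%Z), z).
Proof.
move=> [S HS]; split => /=.
  by exists S => x /HS ->; rewrite mod0z.
by move=> x; rewrite modz_mod.
Qed.

Definition wr_norm (m k : nat) (f : Zk k -> int) (z : Zk k)
  (H : fin_supp k f) : wr m k := exist _ _ (wr_norm_proof m k f z H).

Lemma wr_one_proof (m k : nat) : is_wr_elt m k ((fun _ => 0), 0).
Proof. by split => /=; [exists [::] | move=> x; rewrite mod0z]. Qed.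

Definition wr_one (m k : nat) : wr m k := exist _ _ (wr_one_proof m k).

(* alpha(z) maps (Z_m)_x onto (Z_m)_{z+x}, so (alpha(z) tau)(x) = tau(x - z). *)
Lemma wr_mul_supp (m k : nat) (g h : wr m k) :
  fin_supp k (fun x => wr_sigma m k g x + wr_sigma m k h (x - wr_z m k g)).
Proof.
case: g => [[s z] Hg]; case: h => [[t w] Hh].
rewrite /wr_sigma /wr_z /=.
case: Hg => [[S HS] _]; case: Hh => [[T HT] _] /=; rewrite /= in HS HT.
exists (S ++ map (fun y => y + z) T) => x; rewrite mem_cat negb_or => /andP[xS xT].
rewrite HS // HT ?add0r //; apply: contra xT => H.
by apply/mapP; exists (x - z) => //; rewrite subrK.
Qed.

(* (sigma, z) * (tau, w) = (sigma + alpha(z) tau, z + w) *)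
Definition wr_mul (m k : nat) (g h : wr m k) : wr m k :=
  wr_norm m k _ (wr_z m k g + wr_z m k h) (wr_mul_supp m k g h).

Lemma wr_sigma_supp (m k : nat) (g : wr m k) : fin_supp k (wr_sigma m k g).
Proof. by case: g => [[s z] Hg]; rewrite /wr_sigma /=; case: Hg. Qed.

Definition Pi (s n k : nat) (g : wr (s * n) k) : wr n k :=
  wr_norm n k _ (wr_z (s * n) k g) (wr_sigma_supp (s * n) k g).

Definition is_endo (m k : nat) (f : wr m k -> wr m k) : Prop :=
  forall g h, f (wr_mul m k g h) = wr_mul m k (f g) (f h).

Definition completely_invariant (m k : nat) (H : wr m k -> Prop) : Prop :=
  forall f, is_endo m k f -> forall g, H g -> H (f g).

Definition kerPi (s n k : nat) : wr (s * n) k -> Prop :=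
  fun g => Pi s n k g = wr_one n k.

(* Main.v *)
Require Import Defs.
From mathcomp Require Import all_boot all_order all_algebra.
From Stdlib Require Import FunctionalExtensionality ProofIrrelevance.
Import Order.TTheory GRing.Theory Num.Theory.
Local Open Scope ring_scope.

Lemma wr_ext (m k : nat) (g h : wr m k) :
  (forall x, wr_sigma m k g x = wr_sigma m k h x) -> wr_z m k g = wr_z m k h -> g = h.
Proof.
case: g => [[a z] Hg]; case: h => [[b w] Hh]; rewrite /wr_sigma /wr_z /= => E1 E2.
have Eab : a = b by apply: functional_extensionality.
subst b w; congr exist; exact: proof_irrelevance.
Qed.

Lemma wr_mul_z m k g h : wr_z m k (wr_mul m k g h) = wr_z m k g + wr_z m k h.
Proof. by []. Qed.
Lemma wr_mul_sigma m k g h x : wr_sigma m k (wr_mul m k g h) x =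
  ((wr_sigma m k g x + wr_sigma m k h (x - wr_z m k g)) %% m%:Z)%Z.
Proof. by []. Qed.

Fixpoint wpow (m k : nat) (g : wr m k) (j : nat) : wr m k :=
  match j with 0 => g | j'.+1 => wr_mul m k g (wpow m k g j') end.

Lemma endo_pow m k f g j : is_endo m k f -> f (wpow m k g j) = wpow m k (f g) j.
Proof. by move=> Hf; elim: j => [//|j IH] /=; rewrite Hf IH. Qed.

Lemma wpow_z m k g j : wr_z m k (wpow m k g j) = wr_z m k g *+ j.+1.
Proof. by elim: j => [//|j IH] /=; rewrite wr_mul_z IH [in RHS]mulrS. Qed.

Lemma wr_red m k g x : (wr_sigma m k g x %% m%:Z)%Z = wr_sigma m k g x.
Proof. exact: (proj2 (svalP g)) x. Qed.

Lemma wpow_sigma m k g j : wr_z m k g = 0 -> forall x,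
  wr_sigma m k (wpow m k g j) x = ((wr_sigma m k g x *+ j.+1) %% m%:Z)%Z.
Proof.
move=> Hz x; elim: j => [|j IH] /=; first by rewrite wr_red.
rewrite wr_mul_sigma Hz subr0 IH.
by rewrite modzDmr [in RHS]mulrS.
Qed.

Lemma wr_one_mul m k : wr_mul m k (wr_one m k) (wr_one m k) = wr_one m k.
Proof. by apply: wr_ext => [x|]; rewrite /wr_sigma /wr_z /= ?addr0 ?mod0z. Qed.

Lemma endo_one_z m k f : is_endo m k f -> wr_z m k (f (wr_one m k)) = 0.
Proof.
move=> Hf; have := congr1 (wr_z m k) (Hf (wr_one m k) (wr_one m k)).
rewrite wr_one_mul wr_mul_z => E.
by apply: (@addrI _ (wr_z m k (f (wr_one m k)))); rewrite addr0.
Qed.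

Lemma rv_torsion k (a : Zk k) (m : nat) : (0 < m)%N -> a *+ m = 0 -> a = 0.
Proof.
move=> Hm H; apply/rowP => i; have := congr1 (fun M : 'M[int]_(1,k) => M 0 i) H.
rewrite /= mulmxnE !mxE => /eqP; rewrite mulrn_eq0 => /orP[|/eqP //].
by rewrite eqn0Ngt Hm.
Qed.

Lemma div_supp (m k : nat) (g : wr m k) (n : nat) :
  fin_supp k (fun x => (wr_sigma m k g x %/ n%:Z)%Z).
Proof.
case: (wr_sigma_supp m k g) => S HS; exists S => x /HS ->; exact: div0z.
Qed.

Theorem lemma3p1 (s n k : nat) (hs : (0 < s)%N) (hn : (0 < n)%N) (hk : (0 < k)%N) :
  completely_invariant (s * n) k (kerPi s n k).
Proof.
move=> f Hf g Hg.
set m := (s * n)%N.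
have Hm : (0 < m)%N by rewrite muln_gt0 hs hn.
have gz : wr_z m k g = 0.
  by have := congr1 (wr_z n k) Hg; rewrite /wr_z /=.
have gs : forall x, (wr_sigma m k g x %% n%:Z)%Z = 0.
  by move=> x; have := congr1 (fun p : wr n k => wr_sigma n k p x) Hg; rewrite /wr_sigma /=.
pose h := wr_norm m k _ 0 (div_supp m k g n).
have hz : wr_z m k h = 0 by [].
have Eg : g = wpow m k h n.-1.
  apply: wr_ext => [x|]; last by rewrite wpow_z hz mul0rn.
  rewrite wpow_sigma // prednK // /h /wr_sigma /= -/(wr_sigma _ _ g).
  rewrite pmulrn -mulrzr modzMml mulrzr -pmulrn -mulr_natr.
  by rewrite natz divzK ?wr_red //; apply/dvdz_mod0P; rewrite gs.
have Eone : wpow m k h m.-1 = wr_one m k.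
  apply: wr_ext => [x|]; last by rewrite wpow_z hz mul0rn.
  rewrite wpow_sigma // prednK // -mulr_natr /wr_sigma /=.
  by rewrite natz modzMl.
have fhz : wr_z m k (f h) = 0.
  apply: (rv_torsion _ _ m) => //.
  have := congr1 (wr_z m k) (congr1 f Eone).
  by rewrite endo_pow // wpow_z prednK // endo_one_z.
rewrite Eg endo_pow //.
apply: wr_ext => [x|]; rewrite /wr_sigma /wr_z /= -/(wr_sigma _ _ _) -/(wr_z _ _ _).
  rewrite wpow_sigma // prednK // -mulr_natr natz /m PoszM.
  by rewrite -mulz_modl // modzMl.
by rewrite wpow_z fhz mul0rn.
Qed.
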